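(* Let $\tau_1>0$ and let $\pi^u_{ij}$ be the marginal density of $\sigma_{ij}$ when $\sigma_{ij}\mid\rho_{ij}\sim N\big(0,\frac{\rho_{ij}}{1-\rho_{ij}}\tau_1^2\big)$ and $\rho_{ij}\sim\mathrm{Beta}(a,b)$, i.e. $\pi^u_{ij}(x)=\int_0^1 N\big(x\mid0,\frac{\rho}{1-\rho}\tau_1^2\big)\,\mathrm{Beta}(\rho\mid a,b)\,d\rho$. If $a=b=1/2$ and $\tau_1^2\asymp1/(np^4\tau^2)$, then for all sufficiently large $n$, $$\pi^u_{ij}(x)\ge\sqrt{\frac{1}{2\pi^3}}\,\frac{\tau_1}{x^2}\qquad\text{for all }x>1.$$
   Context: Here $n$ is the sample size, $p=p_n\to\infty$, $\tau\ge 1$, and $\tau_1=\tau_{1,n}$ depends on $n$; $a_n\asymp b_n$ means $a_n/b_n$ is bounded above and away from zero. *)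

(* Defs.v *)
From HB Require Import structures.
From mathcomp Require Import all_boot all_order all_algebra.
From mathcomp Require Import all_classical all_reals all_analysis.
From mathcomp Require Import normal_distribution.
Import Order.TTheory GRing.Theory Num.Theory.
Import numFieldNormedType.Exports.
Local Open Scope classical_set_scope.
Local Open Scope ring_scope.

Definition Beta_fn {R : realType} (a b : R) : R :=
  fine (\int[@lebesgue_measure R]_(t in `]0%R, 1%R[) (t `^ (a - 1) * (1 - t) `^ (b - 1))%:E)%E.

Definition beta_density {R : realType} (a b rho : R) : R :=
  rho `^ (a - 1) * (1 - rho) `^ (b - 1) / Beta_fn a b.

Definition normal_density_var {R : realType} (x v : R) : R :=
  normal_pdf 0 (Num.sqrt v) x.

Definition pi_u {R : realType} (a b tau1 x : R) : \bar R :=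
  (\int[@lebesgue_measure R]_(rho in `]0%R, 1%R[)
     (normal_density_var x (rho / (1 - rho) * tau1 ^+ 2) * beta_density a b rho)%:E)%E.

(* Main.v *)
Require Import Defs.
From HB Require Import structures.
From mathcomp Require Import all_boot all_order all_algebra.
From mathcomp Require Import all_classical all_reals all_analysis.
From mathcomp Require Import normal_distribution.
From mathcomp Require Import measurable_realfun ring lra.
Import Order.TTheory GRing.Theory Num.Theory.
Import numFieldNormedType.Exports.
Local Open Scope classical_set_scope.
Local Open Scope ring_scope.
Section S.
Context {R : realType}.
Notation mu := (@lebesgue_measure R).

Definition bf (t : R) : R := t `^ (1/2 - 1) * (1 - t) `^ (1/2 - 1).
Definition f2 (t : R) : R := (Num.sqrt (t * (1 - t)))^-1.

Lemma half_m1 : (1/2 - 1 : R) = - 2^-1.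
Proof. by rewrite mul1r; field. Qed.

Lemma bfE t : 0 < t < 1 -> bf t = f2 t.
Proof.
case/andP=> t0 t1.
rewrite /bf /f2 half_m1 !powRN !powR12_sqrt ?subr_ge0 ?ltW //.
by rewrite sqrtrM ?ltW // invfM.
Qed.

Lemma f2_cont t : 0 < t < 1 -> {for t, continuous f2}.
Proof.
case/andP=> t0 t1.
apply: continuousV.
  by rewrite sqrtr_eq0 -ltNge mulr_gt0 // subr_gt0.
apply: continuous_comp; last exact: sqrt_continuous.
apply: continuousM; first exact: cvg_id.
apply: continuousB; [exact: cvg_cst | exact: cvg_id].
Qed.

Lemma measurable_bfT : measurable_fun setT bf.
Proof.
apply: measurable_funM => //.
have h : measurable_fun setT (fun t : R => 1 - t) by exact: measurable_funB.
exact: (measurableT_comp (measurable_powR (1/2-1)) h).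
Qed.

Lemma measurable_bf (D : set R) : measurable_fun D bf.
Proof. exact: measurable_funS measurable_bfT. Qed.

Definition aff (x : R) := 2 * x - 1.
Definition F0 := (@asin R) \o aff.

Lemma daff (t : R) : is_derive t (1:R) aff 2.
Proof.
rewrite /aff; apply: is_derive_eq.
by rewrite subr0 /GRing.scale/= mulr1.
Qed.

Lemma dF0 {t : R} : 0 < t < 1 -> is_derive t (1:R) F0 (f2 t).
Proof.
case/andP=> t0 t1.
have h : -1 < aff t < 1.
  by rewrite /aff; apply/andP; split; lra.
have := is_derive1_comp (is_derive1_asin h) (daff t).
congr is_derive.
rewrite /f2 /aff.
have -> : 1 - (2 * t - 1) ^+ 2 = 2 ^+ 2 * (t * (1 - t)) by ring.
rewrite sqrtrM ?sqrtr_sqr ?ler0n // ?exprn_ge0 // invfM.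
rewrite ger0_norm // mulrAC mulVf // mul1r //.
Qed.

Lemma int_mid (e : R) : 0 < e < 1/2 ->
  (\int[mu]_(t in `[e, (1 - e)%R]) (bf t)%:E = (F0 (1 - e) - F0 e)%:E)%E.
Proof.
case/andP=> e0 e1.
have sub : forall t, t \in `[e, 1 - e] -> 0 < t < 1.
  move=> t; rewrite in_itv /= => /andP[a b]; apply/andP; split; lra.
transitivity (\int[mu]_(t in `[e, (1 - e)%R]) (f2 t)%:E)%E.
  by apply: eq_integral => t /set_mem /= /sub h; rewrite bfE.
apply: continuous_FTC2.
- lra.
- apply: continuous_in_subspaceT => t /set_mem /= /sub h.
  exact: f2_cont.
- split.
  + move=> t; rewrite in_itv /= => /andP[a b].
    have h : 0 < t < 1 by apply/andP; split; lra.
    by case: (dF0 h).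
  + apply: cvg_at_right_filter.
    have h : 0 < e < 1 by apply/andP; split; lra.
    apply/differentiable_continuous/derivable1_diffP.
    by case: (dF0 h).
  + apply: cvg_at_left_filter.
    have h : 0 < 1 - e < 1 by apply/andP; split; lra.
    apply/differentiable_continuous/derivable1_diffP.
    by case: (dF0 h).
- move=> t; rewrite in_itv /= => /andP[a b].
  have h : 0 < t < 1 by apply/andP; split; lra.
  by rewrite derive1E; have := dF0 h; case.
Qed.

Lemma F0_bound (e : R) : 0 < e < 1/2 -> F0 (1 - e) - F0 e <= pi.
Proof.
case/andP=> e0 e1.
rewrite /F0 /aff /=.
have h1 : -1 <= 2 * (1 - e) - 1 <= 1 by apply/andP; split; lra.
have h2 : -1 <= 2 * e - 1 <= 1 by apply/andP; split; lra.
have := asin_lepi2 h1; have := asin_geNpi2 h2.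
lra.
Qed.

Lemma bf_ge0 t : 0 <= bf t.
Proof. by rewrite /bf mulr_ge0 // powR_ge0. Qed.

Definition ee (n : nat) : R := (n.+3%:R)^-1.

Lemma ee_bounds n : 0 < ee n < 1/2.
Proof.
rewrite /ee invr_gt0 ltr0n /= mul1r.
rewrite ltf_pV2 ?posrE ?ltr0n // ltr_nat //.
Qed.

Lemma ee_le {m n} : (m <= n)%N -> ee n <= ee m.
Proof.
move=> mn; rewrite /ee lef_pV2 ?posrE ?ltr0n // ler_nat ltnS ltnS ltnS //.
Qed.

Lemma B_int_le : (\int[mu]_(t in `]0%R, 1%R[) (bf t)%:E <= pi%:E)%E.
Proof.
set D := [set` `]0%R, 1%R[].
pose I n := [set` `[ee n, (1 - ee n)%R]].
pose g n := (EFin \o bf) \_ (I n).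
have mD : measurable D := measurable_itv _.
have mg n : measurable_fun D (g n).
  have mI : measurable (I n) := measurable_itv _.
  have H : measurable_fun (D `&` I n) (EFin \o bf).
    by apply/measurable_EFinP; exact: measurable_bf.
  exact: ((measurable_restrict (EFin \o bf) mI mD).1 H).
have g0 : forall k y, D y -> (0 <= g k y)%E.
  move=> k y.
  by move=> _; rewrite /g patchE; case: ifP => _ //; rewrite lee_fin bf_ge0.
have nd x : D x -> {homo g^~ x : n m / (n <= m)%N >-> (n <= m)%E}.
  move=> _ m1 m2 mn; rewrite /g !patchE.
  case: ifPn => xm.
    have xn : x \in I m2.
      move: xm; rewrite /I !inE /= !in_itv /= => /andP[a b].
      have h := ee_le mn; apply/andP; split; lra.
    by rewrite xn.
  by case: ifP => _ //; rewrite lee_fin bf_ge0.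
have lim x : D x -> limn (g^~ x) = (bf x)%:E.
  rewrite /D /= in_itv /= => /andP[x0 x1].
  have m0 : 0 < Num.min x (1 - x) by rewrite lt_min x0 subr_gt0.
  apply: lim_near_cst => //.
  near=> n.
  have : n.+1%:R^-1 < (PosNum m0)%:num by near: n; exact: near_infty_natSinv_lt.
  rewrite /= lt_min => /andP[a b].
  have c : ee n <= n.+1%:R^-1.
    by rewrite /ee lef_pV2 ?posrE ?ltr0n // ler_nat; exact: leq_trans (leqnSn _) (leqnSn _).
  rewrite /g /restrict /patch /= ifT //.
  rewrite /I inE /= in_itv /=; have d := le_lt_trans c a; have e := le_lt_trans c b; apply/andP; split; lra.
have -> : (\int[mu]_(t in D) (bf t)%:E = \int[mu]_(t in D) (fun x => limn (g^~ x)) t)%E.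
  by apply: eq_integral => x /set_mem Dx; rewrite lim.
rewrite (monotone_convergence mu mD mg g0 nd).
apply: lime_le.
  have cv := @cvg_monotone_convergence _ _ _ mu _ mD _ mg g0 nd; exact: cvgP cv.
apply: nearW => n.
rewrite /g -integral_mkcondr setIidr; last first.
  move=> x; rewrite /I /D /= !in_itv /= => /andP[a b].
  have := ee_bounds n; move=> /andP[h1 h2]; apply/andP; split; lra.
rewrite int_mid ?ee_bounds // lee_fin.
exact: F0_bound (ee_bounds n).
Unshelve. all: by end_near.
Qed.

Lemma bf_ge1 t : 0 < t < 1 -> 1 <= bf t.
Proof.
move=> h; rewrite bfE // /f2.
case/andP: h => t0 t1.
have p : 0 < t * (1 - t) by rewrite mulr_gt0 // subr_gt0.
have sp : 0 < Num.sqrt (t * (1 - t)) by rewrite sqrtr_gt0.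
rewrite invr_ge1 ?unitfE ?gt_eqF //.
apply: (@le_trans _ _ (Num.sqrt 1)); last by rewrite sqrtr1.
rewrite ler_sqrt //; nra.
Qed.

Lemma B_int_ge : (1%:E <= \int[mu]_(t in `]0%R, 1%R[) (bf t)%:E)%E.
Proof.
set D := [set` `]0%R, 1%R[].
have mD : measurable D := measurable_itv _.
apply: (@le_trans _ _ (\int[mu]_(t in D) (cst 1%:E t))%E).
  rewrite integral_cst // /D; have := @lebesgue_measure_itv R `]0%R, 1%R[; rewrite /= lte_fin ltr01 sube0 => ->.
  by rewrite mul1e.
have m2 : measurable_fun D (EFin \o bf).
  by apply/measurable_EFinP; exact: measurable_bf.
apply: (ge0_le_integral mu mD _ (measurable_cst _) m2).
- by move=> x _; rewrite /= lee_fin.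
- move=> x; rewrite /D /= in_itv /= => h.
  by rewrite /= lee_fin bf_ge1.
Qed.

Lemma Beta_bounds : 1 <= Beta_fn (1/2 : R) (1/2) <= pi.
Proof.
have -> : Beta_fn (1/2 : R) (1/2) = fine (\int[mu]_(t in `]0%R, 1%R[) (bf t)%:E)%E.
  by [].
move: B_int_ge B_int_le.
case: (\int[mu]_(t in `]0%R, 1%R[) (bf t)%:E)%E => [r| |] //=.
by rewrite !lee_fin => -> ->.
Qed.

Definition gfun (K c r : R) : R := K * r^-1 * expR (c - c / r).

Lemma integrand_eq (t x r : R) : 0 < t -> 0 < r < 1 ->
  normal_density_var x (r / (1 - r) * t ^+ 2) * beta_density (1/2) (1/2) r =
  gfun ((t * Num.sqrt (2 * pi : R) * Beta_fn (1/2 : R) (1/2))^-1) (x ^+ 2 / (2 * t ^+ 2)) r.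
Proof.
move=> t0 hr.
have [B1 _] := andP Beta_bounds.
set B := Beta_fn (1/2 : R) (1/2).
have B0 : 0 < B by exact: lt_le_trans ltr01 B1.
case/andP: (hr) => r0 r1.
have r1' : 0 < 1 - r by rewrite subr_gt0.
set v := r / (1 - r) * t ^+ 2.
have v0 : 0 < v by rewrite /v mulr_gt0 ?divr_gt0 // exprn_gt0.
have sv0 : Num.sqrt v != 0 by rewrite sqrtr_eq0 -ltNge.
rewrite /normal_density_var (normal_pdfE _ sv0) /= /normal_peak /normal_fun.
rewrite sqr_sqrtr ?ltW //.
rewrite /beta_density -/(bf r) bfE // /f2 -/B.
have S0 : 0 < Num.sqrt (2 * pi : R) by rewrite sqrtr_gt0 mulr_gt0 // pi_gt0.
have AB : Num.sqrt (v * pi *+ 2) * Num.sqrt (r * (1 - r)) = r * t * Num.sqrt (2 * pi : R).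
  rewrite -sqrtrM; last by rewrite mulrn_wge0 // mulr_ge0 ?ltW // pi_gt0.
  have -> : v * pi *+ 2 * (r * (1 - r)) = (r * t) ^+ 2 * (2 * pi).
    by rewrite /v -mulr_natr; field; rewrite subr_eq0 gt_eqF.
  by rewrite sqrtrM ?exprn_ge0 ?mulr_ge0 ?ltW // sqrtr_sqr ger0_norm // mulr_ge0 ?ltW.
have Ex : - (x - 0) ^+ 2 / (v *+ 2) = x ^+ 2 / (2 * t ^+ 2) - x ^+ 2 / (2 * t ^+ 2) / r.
  rewrite /v subr0 -mulr_natr; field.
  by rewrite subr_eq0 gt_eqF // gt_eqF // gt_eqF.
rewrite /gfun Ex.
have A0 : Num.sqrt (v * pi *+ 2) != 0.
  by rewrite sqrtr_eq0 -ltNge mulrn_wgt0 // mulr_gt0 // pi_gt0.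
have Bq0 : Num.sqrt (r * (1 - r)) != 0.
  by rewrite sqrtr_eq0 -ltNge mulr_gt0.
set E := expR _.
have -> : (Num.sqrt (v * pi *+ 2))^-1 * E * ((Num.sqrt (r * (1 - r)))^-1 / B)
    = (r * t * Num.sqrt (2 * pi : R))^-1 * E / B.
  by rewrite -AB invfM !mulrA; congr (_ * _); rewrite mulrAC.
move: S0; move: (Num.sqrt (2 * pi : R)) => S S0.
move: E => E.
field.
by rewrite !gt_eqF.
Qed.

Lemma inner_cont (c r : R) : r != 0 -> {for r, continuous (fun y : R => c - c / y)}.
Proof.
move=> r0.
apply: continuousB; first exact: cvg_cst.
apply: continuousM; first exact: cvg_cst.
exact: inv_continuous.
Qed.

Lemma gfun_cont K c r : r != 0 -> {for r, continuous (gfun K c)}.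
Proof.
move=> r0; rewrite /gfun.
apply: continuousM.
  apply: continuousM; first exact: cvg_cst.
  exact: inv_continuous.
apply: continuous_comp; first exact: inner_cont.
exact: continuous_expR.
Qed.

Definition hfun (K c r0 r : R) : R := K * r0 * (r ^+ 2)^-1 * expR (c - c / r).
Definition Hfun (K c r0 r : R) : R := K * r0 / c * expR (c - c / r).

Lemma hfun_cont K c r0 r : r != 0 -> {for r, continuous (hfun K c r0)}.
Proof.
move=> r1; rewrite /hfun.
apply: continuousM.
  apply: continuousM; first exact: cvg_cst.
  apply: continuousV; first by rewrite expf_eq0.
  exact: exprn_continuous.
apply: continuous_comp; first exact: inner_cont.
exact: continuous_expR.
Qed.

Lemma d_inner (c r : R) : r != 0 -> is_derive r (1:R) (fun y : R => c - c / y) (c * (r ^+ 2)^-1).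
Proof.
move=> r0.
have iv : is_derive r (1:R) (fun y : R => y^-1) (- r ^- 2 *: 1).
  exact: is_deriveV.
apply: is_derive_eq.
by rewrite /GRing.scale /= add0r mul1r mulr1 mulrN opprK.
Qed.

Lemma dHfun (K c r0 r : R) : r != 0 -> c != 0 ->
  is_derive r (1:R) (Hfun K c r0) (hfun K c r0 r).
Proof.
move=> rn cn.
have e := is_derive1_comp (is_derive_expR _) (d_inner c r rn).
simpl in e.
rewrite /Hfun /hfun.
apply: is_derive_eq.
rewrite /GRing.scale /=; field.
by rewrite cn rn.
Qed.

Lemma lower (K c r0 : R) : 0 < K -> 0 < c -> 0 < r0 < 1 ->
  ((K * r0 * (1 - expR (c - c / r0)) / c)%:E <=
    \int[mu]_(r in `]0%R, 1%R[) (gfun K c r)%:E)%E.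
Proof.
move=> K0 c0 /andP[r00 r01].
pose D : set R := [set` `]0%R, 1%R[].
pose A : set R := [set` `[r0, 1%R[].
pose P : set R := [set` `]0%R, +oo[].
have mD : measurable D := measurable_itv _.
have mA : measurable A := measurable_itv _.
have mP : measurable P := measurable_itv _.
have AD : A `<=` D.
  move=> r; rewrite /A /D /= !in_itv /= => /andP[a b].
  by apply/andP; split => //; exact: lt_le_trans r00 a.
have DP : D `<=` P.
  by move=> r; rewrite /D /P /= !in_itv /= andbT => /andP[a b].
have gP : measurable_fun P (EFin \o gfun K c).
  apply/measurable_EFinP.
  apply: open_continuous_measurable_fun; first exact: interval_open.
  move=> r /set_mem; rewrite /P /= in_itv /= andbT => r0'.
  by apply: gfun_cont; rewrite gt_eqF.
have hP : measurable_fun P (EFin \o hfun K c r0).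
  apply/measurable_EFinP.
  apply: open_continuous_measurable_fun; first exact: interval_open.
  move=> r /set_mem; rewrite /P /= in_itv /= andbT => r0'.
  by apply: hfun_cont; rewrite gt_eqF.
have gD : measurable_fun D (EFin \o gfun K c) := measurable_funS mP DP gP.
have gA : measurable_fun A (EFin \o gfun K c) := measurable_funS mD AD gD.
have hA : measurable_fun A (EFin \o hfun K c r0) :=
  measurable_funS mP (subset_trans AD DP) hP.
have g0 : forall r, D r -> (0 <= (gfun K c r)%:E)%E.
  move=> r; rewrite /D /= in_itv /= => /andP[a b].
  by rewrite lee_fin /gfun mulr_ge0 ?expR_ge0 // mulr_ge0 ?invr_ge0 ?ltW.
have h0 : forall r, A r -> (0 <= (hfun K c r0 r)%:E)%E.
  move=> r /AD; rewrite /D /= in_itv /= => /andP[a b].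
  by rewrite lee_fin /hfun mulr_ge0 ?expR_ge0 // mulr_ge0 ?invr_ge0 ?exprn_ge0 ?mulr_ge0 ?ltW.
apply: (@le_trans _ _ (\int[mu]_(r in A) (hfun K c r0 r)%:E)%E); last first.
  apply: (@le_trans _ _ (\int[mu]_(r in A) (gfun K c r)%:E)%E); last first.
    exact: (ge0_subset_integral mu mA mD gD g0 AD).
  apply: (ge0_le_integral mu mA h0 hA gA).
  move=> r ra; have := AD _ ra; move: ra; rewrite /A /D /= !in_itv /= => /andP[c1 d] /andP[a b].
  have q : r0 / r <= 1 by rewrite ler_pdivrMr // mul1r.
  rewrite lee_fin /hfun /gfun; apply: ler_wpM2r; first exact: expR_ge0.
  rewrite -mulrA; apply: ler_wpM2l; first exact: ltW.
  rewrite expr2 invfM mulrA -[leRHS]mul1r; apply: ler_wpM2r => //.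
  by rewrite invr_ge0 ltW.
rewrite /A integral_itv_bndo_bndc; last exact: hA.
rewrite (@continuous_FTC2 _ (hfun K c r0) (Hfun K c r0)) //.
- rewrite -EFinB lee_fin /Hfun divr1 subrr expR0 mulr1.
  by rewrite le_eqVlt; apply/orP; left; apply/eqP; field; rewrite gt_eqF.
- apply: continuous_in_subspaceT => r /set_mem /=; rewrite in_itv /= => /andP[a b].
  by apply: hfun_cont; rewrite gt_eqF // (lt_le_trans r00 a).
- split.
  + move=> r; rewrite in_itv /= => /andP[a b].
    by case: (dHfun K c r0 r (negbT (gt_eqF (lt_trans r00 a))) (negbT (gt_eqF c0))).
  + apply: cvg_at_right_filter.
    apply/differentiable_continuous/derivable1_diffP.
    by case: (dHfun K c r0 r0 (negbT (gt_eqF r00)) (negbT (gt_eqF c0))).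
  + apply: cvg_at_left_filter.
    apply/differentiable_continuous/derivable1_diffP.
    by case: (dHfun K c r0 1 (negbT (gt_eqF (@ltr01 R))) (negbT (gt_eqF c0))).
- move=> r; rewrite in_itv /= => /andP[a b].
  rewrite derive1E.
  by case: (dHfun K c r0 r (negbT (gt_eqF (lt_trans r00 a))) (negbT (gt_eqF c0))).
Qed.

Lemma sqrt_const : Num.sqrt (1 / (2 * pi ^+ 3)) = (pi * Num.sqrt (2 * pi : R))^-1.
Proof.
have p0 : 0 < (pi : R) := pi_gt0 R.
have S0 : 0 < Num.sqrt (2 * pi : R) by rewrite sqrtr_gt0 mulr_gt0.
have -> : 1 / (2 * pi ^+ 3) = ((pi * Num.sqrt (2 * pi : R))^-1) ^+ 2 :> R.
  rewrite exprVn exprMn sqr_sqrtr ?mulr_ge0 ?ltW //.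
  by rewrite mul1r; congr (_^-1); ring.
by rewrite sqrtr_sqr ger0_norm // invr_ge0 mulr_ge0 ?ltW.
Qed.

Lemma final_ineq (t x B : R) : 0 < t -> t ^+ 2 <= 1/12 -> 1 < x -> 0 < B <= pi ->
  Num.sqrt (1 / (2 * pi ^+ 3)) * t / x ^+ 2 <=
  (t * Num.sqrt (2 * pi : R) * B)^-1 * (3/4) *
    (1 - expR (x ^+ 2 / (2 * t ^+ 2) - x ^+ 2 / (2 * t ^+ 2) / (3/4))) / (x ^+ 2 / (2 * t ^+ 2)).
Proof.
move=> t0 t2 x1 /andP[B0 Bp].
have p0 : 0 < (pi : R) := pi_gt0 R.
have S0 : 0 < Num.sqrt (2 * pi : R) by rewrite sqrtr_gt0 mulr_gt0.
have x0 : 0 < x by lra.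
have x2 : 1 < x ^+ 2 by nra.
have tt0 : 0 < t ^+ 2 by rewrite exprn_gt0.
set c := x ^+ 2 / (2 * t ^+ 2).
have c6 : 6 <= c.
  rewrite /c ler_pdivlMr; last by rewrite mulr_gt0.
  nra.
have cE : c - c / (3/4) = - (c / 3) by field.
set E := expR _.
have E3 : E <= 1/3.
  rewrite /E cE expRN.
  have e3 : 3 <= expR (c / 3).
    apply: le_trans (expR_ge1Dx _).
    lra.
  rewrite mul1r lef_pV2 ?posrE ?expR_gt0 ?ltr0n //.
rewrite sqrt_const.
move: S0; move: (Num.sqrt (2 * pi : R)) => S S0.
move: p0 Bp; move: (pi : R) => q p0 Bp.
have -> : (q * S)^-1 * t / x ^+ 2 = q^-1 * (t / (S * x ^+ 2)).
  by field; rewrite !gt_eqF.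
have -> : (t * S * B)^-1 * (3 / 4) * (1 - E) / c = (3/2 * (1 - E) / B) * (t / (S * x ^+ 2)).
  by rewrite /c; field; rewrite !gt_eqF.
apply: ler_wpM2r; first by rewrite divr_ge0 ?mulr_ge0 ?exprn_ge0 ?ltW.
apply: (@le_trans _ _ B^-1); first by rewrite lef_pV2 ?posrE.
rewrite -[X in X <= _]mul1r; apply: ler_wpM2r; first by rewrite invr_ge0 ltW.
lra.
Qed.

End S.

Theorem lemma4 (R : realType) (p : nat -> nat) (tau : R) (tau1 : nat -> R) :
  (fun n => (p n)%:R : R) @ \oo --> +oo ->
  1 <= tau ->
  (forall n, 0 < tau1 n) ->
  (exists c C : R, 0 < c /\ 0 < C /\
     \forall n \near \oo,
       c <= tau1 n ^+ 2 / (1 / (n%:R * (p n)%:R ^+ 4 * tau ^+ 2)) <= C) ->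
  \forall n \near \oo, forall x : R, 1 < x ->
    ((Num.sqrt (1 / (2 * pi ^+ 3)) * tau1 n / x ^+ 2)%:E
       <= pi_u (1 / 2) (1 / 2) (tau1 n) x)%E.
Proof.
move=> hp tau1' t0 [c0 [C [c00 [C0 hn]]]].
have hp1 : \forall n \near \oo, 1 <= (p n)%:R :> R.
  exact: ((cvgryPge _).1 hp 1).
near=> n => x x1.
have t2 : tau1 n ^+ 2 <= 1/12.
  have /andP[_ h] : c0 <= tau1 n ^+ 2 / (1 / (n%:R * (p n)%:R ^+ 4 * tau ^+ 2)) <= C.
    by near: n.
  have p1 : 1 <= (p n)%:R :> R by near: n.
  have nC : 12 * C <= n%:R :> R by near: n; exact: nbhs_infty_ger.
  rewrite div1r invrK in h.
  set s := tau1 n ^+ 2 in h *.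
  have s0 : 0 <= s by rewrite exprn_ge0 // ltW.
  have P1 : 1 <= (p n)%:R ^+ 4 :> R by rewrite exprn_ege1.
  have T1 : 1 <= tau ^+ 2 by rewrite exprn_ege1.
  have n0 : 0 <= n%:R :> R by rewrite ler0n.
  have a1 : n%:R <= n%:R * (p n)%:R ^+ 4 * tau ^+ 2 :> R.
    rewrite -mulrA ler_peMr // ?mulr_ge0 //.
    apply: (@le_trans _ _ (1 * 1)); first by rewrite mulr1.
    by apply: ler_pM.
  have a2 : s * n%:R <= C.
    apply: le_trans h; exact: ler_wpM2l.
  have a3 : s * (12 * C) <= C.
    apply: le_trans a2; exact: ler_wpM2l.
  nra.
rewrite /pi_u.
set B := Beta_fn (1/2 : R) (1/2).
set K := (tau1 n * Num.sqrt (2 * pi : R) * B)^-1.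
set c := x ^+ 2 / (2 * tau1 n ^+ 2).
have -> : (\int[lebesgue_measure]_(rho in `]0%R, 1%R[)
     (normal_density_var x (rho / (1 - rho) * tau1 n ^+ 2) *
      beta_density (1 / 2) (1 / 2) rho)%:E =
   \int[lebesgue_measure]_(rho in `]0%R, 1%R[) (gfun K c rho)%:E)%E.
  apply: eq_integral => r /set_mem /=; rewrite in_itv /= => hr.
  by rewrite integrand_eq.
have [B1 Bp] := andP (@Beta_bounds R).
have B0 : 0 < B by exact: lt_le_trans ltr01 B1.
have S0 : 0 < Num.sqrt (2 * pi : R) by rewrite sqrtr_gt0 mulr_gt0 // pi_gt0.
have K0 : 0 < K by rewrite /K invr_gt0 !mulr_gt0.
have cc0 : 0 < c by rewrite /c divr_gt0 ?mulr_gt0 ?exprn_gt0 //; lra.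
have r0 : 0 < (3/4 : R) < 1 by apply/andP; split; lra.
apply: (le_trans _ (lower K c (3/4) K0 cc0 r0)).
rewrite lee_fin.
apply: final_ineq => //.
by rewrite B0.
Unshelve. all: by end_near.
Qed.
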